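(* A semigroup $\langle A;\cdot\rangle$ is an Abelian algebra if and only if $\langle A;\cdot\rangle$ is stationary and for all $a,b,c,d,u,v\in A$ the equality $aub=cud$ implies $avb=cvd$.
   Context: A semigroup $\langle A;\cdot\rangle$ is called stationary if for all $u,v,b,c\in A$, $ub=uc$ implies $vb=vc$, and $bu=cu$ implies $bv=cv$. A polynomial operation of an algebra is an operation obtained from a term by substituting elements of the algebra for some of its variables. An algebra is called Abelian if for every polynomial operation $t(x,y_1,\ldots,y_n)$ and all elements $u,v,c_1,\ldots,c_n,d_1,\ldots,d_n$ of the algebra, $t(u,c_1,\ldots,c_n)=t(u,d_1,\ldots,d_n)$ implies $t(v,c_1,\ldots,c_n)=t(v,d_1,\ldots,d_n)$. (An ''Abelian semigroup'' means a semigroup that is an Abelian algebra in this sense.) *)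

(* Defs.v *)
(* Terms of the semigroup signature with constants from A (polynomials).
   Variables are indexed by nat; variable 0 plays the role of x, variable
   (S i) the role of y_(i+1). *)
Inductive poly (A : Type) : Type :=
| PVar : nat -> poly A
| PConst : A -> poly A
| PMul : poly A -> poly A -> poly A.

Arguments PVar {A} _.
Arguments PConst {A} _.
Arguments PMul {A} _ _.

Fixpoint peval {A : Type} (mul : A -> A -> A) (env : nat -> A) (t : poly A) : A :=
  match t with
  | PVar i => env i
  | PConst a => a
  | PMul t1 t2 => mul (peval mul env t1) (peval mul env t2)
  end.

Definition scons {A : Type} (x : A) (ys : nat -> A) : nat -> A :=
  fun i => match i with O => x | S j => ys j end.

Definition stationary {A : Type} (mul : A -> A -> A) : Prop :=
  forall u v b c : A,
    (mul u b = mul u c -> mul v b = mul v c) /\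
    (mul b u = mul c u -> mul b v = mul c v).

Definition abelian {A : Type} (mul : A -> A -> A) : Prop :=
  forall (t : poly A) (u v : A) (c d : nat -> A),
    peval mul (scons u c) t = peval mul (scons u d) t ->
    peval mul (scons v c) t = peval mul (scons v d) t.

(* Main.v *)
Require Import Defs.
From Stdlib Require Import List.
Import ListNotations.

Section S.
Variable A : Type.
Variable mul : A -> A -> A.
Hypothesis assoc : forall x y z : A, mul x (mul y z) = mul (mul x y) z.

Definition mul' (a b : option A) : option A :=
  match a, b with
  | None, _ => b
  | _, None => a
  | Some x, Some y => Some (mul x y)
  end.

Lemma mul'_assoc a b c : mul' a (mul' b c) = mul' (mul' a b) c.
Proof. destruct a, b, c; simpl; try reflexivity; rewrite assoc; reflexivity. Qed.

Definition leafv (env : nat -> A) (l : nat + A) : option A :=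
  match l with inl i => Some (env i) | inr a => Some a end.

Definition evalM env (l : list (nat + A)) : option A :=
  fold_right (fun a acc => mul' (leafv env a) acc) None l.

Lemma evalM_app env l1 l2 : evalM env (l1 ++ l2) = mul' (evalM env l1) (evalM env l2).
Proof.
  induction l1; simpl. reflexivity.
  rewrite IHl1, mul'_assoc. reflexivity.
Qed.

Fixpoint flat (t : poly A) : list (nat + A) :=
  match t with
  | PVar i => [inl i]
  | PConst a => [inr a]
  | PMul t1 t2 => flat t1 ++ flat t2
  end.

Lemma flat_eval env t : evalM env (flat t) = Some (peval mul env t).
Proof.
  induction t; simpl; try (destruct (env n); reflexivity); try reflexivity.
  rewrite evalM_app, IHt1, IHt2. reflexivity.
Qed.

Lemma evalM_None env l : evalM env l = None <-> l = [].
Proof.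
  destruct l; simpl. tauto.
  split; [|discriminate].
  destruct (evalM env l), s; simpl; discriminate.
Qed.

Lemma mul'_None a b : mul' a b = None <-> a = None /\ b = None.
Proof. destruct a, b; simpl; split; intuition discriminate. Qed.

Hypothesis st : stationary mul.
Hypothesis cond : forall a b c d u v : A,
     mul (mul a u) b = mul (mul c u) d -> mul (mul a v) b = mul (mul c v) d.

Lemma Q u v (a b c d : option A) :
  (a = None <-> c = None) -> (b = None <-> d = None) ->
  mul' (mul' a (Some u)) b = mul' (mul' c (Some u)) d ->
  mul' (mul' a (Some v)) b = mul' (mul' c (Some v)) d.
Proof.
  intros Hac Hbd H.
  destruct a as [a|], b as [b|], c as [c|], d as [d|]; simpl in *;
    try (exfalso; intuition discriminate); try reflexivity; injection H as H; f_equal.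
  - eapply cond; eauto.
  - eapply (proj2 (st u v a c)); eauto.
  - eapply (proj1 (st u v b d)); eauto.
Qed.

Lemma key u v c d (l2 l1 : list (nat + A)) :
  mul' (evalM (scons v c) l1) (evalM (scons u c) l2) =
  mul' (evalM (scons v d) l1) (evalM (scons u d) l2) ->
  mul' (evalM (scons v c) l1) (evalM (scons v c) l2) =
  mul' (evalM (scons v d) l1) (evalM (scons v d) l2).
Proof.
  revert l1; induction l2 as [|x l2 IH]; intros l1 H; simpl in *.
  - exact H.
  - destruct x as [[|i]|a].
    +
      assert (H' : mul' (mul' (evalM (scons v c) l1) (Some u)) (evalM (scons u c) l2) =
                   mul' (mul' (evalM (scons v d) l1) (Some u)) (evalM (scons u d) l2)).
      { rewrite <- !mul'_assoc. exact H. }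
      apply Q with (v := v) in H'.
      2: { rewrite !evalM_None; tauto. }
      2: { rewrite !evalM_None; tauto. }
      specialize (IH (l1 ++ [inl 0])).
      rewrite !evalM_app in IH; simpl in IH.
      rewrite !mul'_assoc. apply IH.
      destruct (evalM (scons v c) l1), (evalM (scons v d) l1); simpl in *; exact H'.
    + specialize (IH (l1 ++ [inl (S i)])).
      rewrite !evalM_app in IH; simpl in IH.
      rewrite !mul'_assoc. apply IH.
      rewrite <- !mul'_assoc. simpl. exact H.
    + specialize (IH (l1 ++ [inr a])).
      rewrite !evalM_app in IH; simpl in IH.
      rewrite !mul'_assoc. apply IH.
      rewrite <- !mul'_assoc. simpl. exact H.
Qed.

End S.

Theorem mainTheorem10 (A : Type) (mul : A -> A -> A)
  (assoc : forall x y z : A, mul x (mul y z) = mul (mul x y) z) :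
  abelian mul <->
  (stationary mul /\
   forall a b c d u v : A,
     mul (mul a u) b = mul (mul c u) d -> mul (mul a v) b = mul (mul c v) d).
Proof.
  split.
  - intros H. split.
    + intros u v b c. split.
      * intro E. exact (H (PMul (PVar 0) (PVar 1)) u v (fun _ => b) (fun _ => c) E).
      * intro E. exact (H (PMul (PVar 1) (PVar 0)) u v (fun _ => b) (fun _ => c) E).
    + intros a b c d u v E.
      exact (H (PMul (PMul (PVar 1) (PVar 0)) (PVar 2)) u v
               (fun i => match i with 0 => a | _ => b end)
               (fun i => match i with 0 => c | _ => d end) E).
  - intros [st cond] t u v c d E.
    assert (E' : evalM A mul (scons u c) (flat A t) = evalM A mul (scons u d) (flat A t)).
    { rewrite !flat_eval; congruence. }
    pose proof (key A mul assoc st cond u v c d (flat A t) [] E') as K.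
    simpl in K. rewrite !(flat_eval A mul assoc) in K. now injection K.
Qed.
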